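(* Let $K_0$ be a finite extension of $\mathbb{Q}_2$ with odd absolute ramification index $e_0$, and let $K_2/K_0$ be a totally ramified cyclic extension of degree $4$ with Galois group generated by $\sigma$, with intermediate field $K_1$ (the fixed field of $\sigma^2$), whose lower ramification break numbers are $b_1=e_0$ and $b_2=b_1+2e_0$. Then for every odd integer $a$ there are $\alpha,\rho\in K_2$ with $v_2(\alpha)=a$ and $v_2(\rho)=a+(b_2-b_1)$ such that: if $a\equiv e_0\pmod 4$, then $\mu_1:=(\sigma-1)\alpha-\rho\in K_1$ with $v_2(\mu_1)=a+b_1$; if $a\equiv 3e_0\pmod 4$, then $\mu_0:=(\sigma+1)\alpha-\rho\in K_0$ with $v_2(\mu_0)=a+b_1$.
   Context: $v_2$ is the normalized valuation of $K_2$. The lower ramification break numbers of $\mathrm{Gal}(K_2/K_0)$ are the integers $j\ge1$ with $G_j\ne G_{j+1}$ in the lower-numbering ramification filtration. $(\sigma\pm1)\alpha=\sigma(\alpha)\pm\alpha$. *)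

(* Defs.v *)
From mathcomp Require Import all_boot all_order all_algebra.
Set Implicit Arguments. Unset Strict Implicit. Unset Printing Implicit Defensive.
Import Order.TTheory GRing.Theory Num.Theory.
Local Open Scope ring_scope.

Section LocalField.
Variable K : fieldType.
(* v : K -> int is a valuation; its value at 0 is irrelevant (v(0) = +oo
   is encoded by always treating x = 0 separately). *)
Variable v : K -> int.

Definition is_normalized_dvaluation : Prop :=
  [/\ forall x y : K, x != 0 -> y != 0 -> v (x * y) = v x + v y,
      forall x y : K, x != 0 -> y != 0 -> x + y != 0 ->
                      Num.min (v x) (v y) <= v (x + y)
    & exists pi : K, pi != 0 /\ v pi = 1].

(* "v(x) >= n" with the convention v(0) = +oo *)
Definition vge (x : K) (n : int) : Prop := x = 0 \/ v x >= n.

Definition v_complete : Prop :=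
  forall u : nat -> K,
    (forall N : int, exists n0 : nat, forall m n : nat,
        (n0 <= m)%N -> (n0 <= n)%N -> vge (u m - u n) N) ->
    exists l : K, forall N : int, exists n0 : nat, forall n : nat,
        (n0 <= n)%N -> vge (u n - l) N.

(* the residue field O_K / m_K is finite *)
Definition finite_residue_field : Prop :=
  exists s : seq K, forall x : K, vge x 0 ->
    exists2 r, r \in s & vge (x - r) 1.

(* K is a finite extension of Q_2 with normalized valuation v: a complete
   discretely valued field of characteristic 0 with finite residue field
   of characteristic 2. *)
Definition finite_ext_Q2 : Prop :=
  [/\ is_normalized_dvaluation, v_complete, finite_residue_field,
      [pchar K] =i pred0 & 0 < v 2].

Definition in_OK (x : K) : Prop := vge x 0.

Definition in_lower_ram_group (i : nat) (g : K -> K) : Prop :=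
  forall x : K, in_OK x -> vge (g x - x) (i.+1)%:Z.

Definition is_lower_break (sigma : K -> K) (j : nat) : Prop :=
  (1 <= j)%N /\
  ~ (forall k : 'I_4, in_lower_ram_group j (iter k sigma) <->
                      in_lower_ram_group j.+1 (iter k sigma)).
End LocalField.

(* Main.v *)
Require Import Defs.
From mathcomp Require Import all_boot all_order all_algebra.
From mathcomp Require Import zify ring lra.
From Stdlib Require Import Classical.
Import Order.TTheory GRing.Theory Num.Theory.
Local Open Scope ring_scope.

Ltac clia := repeat (match goal with H : ?T |- _ => lazymatch T with is_true (leq _ _) => fail | _ => clear H end end); lia.

Section Main.
Variable K : fieldType.
Variable v : K -> int.
Hypothesis hM : forall x y : K, x != 0 -> y != 0 -> v (x * y) = v x + v y.
Hypothesis hU : forall x y : K, x != 0 -> y != 0 -> x + y != 0 ->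
                      Num.min (v x) (v y) <= v (x + y).

Lemma v1 : v 1 = 0.
Proof.
have o : (1:K) != 0 by exact: oner_neq0.
have := hM _ _ o o. rewrite mulr1. lia.
Qed.

Lemma vN1 : v (-1) = 0.
Proof.
have h : (-1 : K) != 0 by rewrite oppr_eq0 oner_neq0.
have := hM _ _ h h; rewrite mulrNN mulr1 v1. lia.
Qed.

Lemma vN {x : K} : v (- x) = v x.
Proof.
have [->|x0] := eqVneq x 0; first by rewrite oppr0.
have h : (-1 : K) != 0 by rewrite oppr_eq0 oner_neq0.
by rewrite -mulN1r hM // vN1 add0r.
Qed.

Lemma vV {x : K} : x != 0 -> v (x^-1) = - v x.
Proof.
move=> x0; have xi : x^-1 != 0 by rewrite invr_eq0.
have := hM _ _ x0 xi; rewrite mulfV // v1. lia.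
Qed.

Lemma vDiv {x y : K} : x != 0 -> y != 0 -> v (x / y) = v x - v y.
Proof. by move=> x0 y0; rewrite hM ?invr_eq0 // vV. Qed.

Lemma vX {x : K} {n} : x != 0 -> v (x ^+ n) = (n%:Z * v x)%R.
Proof.
move=> x0; elim: n => [|n IH]; first by rewrite expr0 v1 mul0r.
rewrite exprS hM ?expf_neq0 // IH. rewrite intS mulrDl mul1r. done.
Qed.

Lemma vXz {x : K} {n : int} : x != 0 -> v (x ^ n) = (n * v x)%R.
Proof.
move=> x0; case: n => n.
  by rewrite /exprz vX.
rewrite /exprz vV ?expf_neq0 // vX // NegzE. lia.
Qed.

Lemma vD_lt {x y : K} : x != 0 -> y != 0 -> v x < v y -> x + y != 0 /\ v (x + y) = v x.
Proof.
move=> x0 y0 lt.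
have xy0 : x + y != 0.
  apply/eqP=> /eqP; rewrite addr_eq0 => /eqP ex.
  by move: lt; rewrite ex vN ltxx.
split=> //.
have h1 := hU _ _ x0 y0 xy0.
have ny0 : - y != 0 by rewrite oppr_eq0.
have h2 : x + y + - y != 0 by rewrite addrK.
have h3 := hU _ _ xy0 ny0 h2. rewrite addrK vN in h3.
move: h1 h3 lt; rewrite !ge_min => /orP [] ? /orP [] ?; lia.
Qed.

Lemma vD_gt {x y : K} : x != 0 -> y != 0 -> v y < v x -> x + y != 0 /\ v (x + y) = v y.
Proof. by move=> x0 y0 lt; rewrite addrC; apply: vD_lt. Qed.

Lemma vge0 {n : int} : vge v 0 n. Proof. by left. Qed.

Lemma vgeP {x : K} {n} : x != 0 -> vge v x n <-> n <= v x.
Proof. move=> x0; split=> [[e|//]|h]; [by move: x0; rewrite e eqxx | by right]. Qed.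

Lemma vge_le {x : K} {n m} : vge v x n -> m <= n -> vge v x m.
Proof. by move=> [->|h] le; [left|right; apply: le_trans h]. Qed.

Lemma vgeN {x : K} {n} : vge v (- x) n <-> vge v x n.
Proof.
split=> [[e|h]|[e|h]].
- by left; apply/eqP; rewrite -oppr_eq0 e.
- by right; rewrite -vN.
- by left; rewrite e oppr0.
- by right; rewrite vN.
Qed.

Lemma vgeD {x y : K} {n} : vge v x n -> vge v y n -> vge v (x + y) n.
Proof.
move=> [->|hx]; first by rewrite add0r.
move=> [->|hy]; first by rewrite addr0; right.
have [e|xy0] := eqVneq (x + y) 0; first by left.
have [x0|x0] := eqVneq x 0; first by right; rewrite x0 add0r.
have [y0|y0] := eqVneq y 0; first by right; rewrite y0 addr0.
right; apply: le_trans (hU _ _ x0 y0 xy0). by rewrite le_min hx hy.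
Qed.

Lemma vgeB {x y : K} {n} : vge v x n -> vge v y n -> vge v (x - y) n.
Proof. by move=> hx hy; apply: vgeD => //; apply/vgeN. Qed.

Lemma vgeM {x y : K} {n m} : vge v x n -> vge v y m -> vge v (x * y) (n + m).
Proof.
move=> [->|hx]; first by rewrite mul0r; left.
move=> [->|hy]; first by rewrite mulr0; left.
have [x0|x0] := eqVneq x 0; first by left; rewrite x0 mul0r.
have [y0|y0] := eqVneq y 0; first by left; rewrite y0 mulr0.
right; rewrite hM //. by apply: lerD.
Qed.

Lemma vge_self (x : K) : vge v x (v x).
Proof. by right. Qed.

Lemma vge_exact {x : K} {n} : x != 0 -> v x = n -> vge v x n.
Proof. by move=> x0 e; right; rewrite e. Qed.

Lemma vge_add_exact {x y : K} {n} : x != 0 -> v x = n -> vge v y (n + 1) ->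
  x + y != 0 /\ v (x + y) = n.
Proof.
move=> x0 ex [->|hy]; first by rewrite addr0.
have [y0|y0] := eqVneq y 0; first by rewrite y0 addr0.
rewrite -ex; apply: vD_lt => //. rewrite ex. lia.
Qed.

Hypothesis hv2 : 0 < v 2.
Hypothesis hres : finite_residue_field v.

Let vge := vge v.
Let O := in_OK v.

Lemma O1 : O 1. Proof. by right; rewrite (v1). Qed.
Lemma OD {x y : K} : O x -> O y -> O (x + y). Proof. exact: (vgeD). Qed.
Lemma OB {x y : K} : O x -> O y -> O (x - y). Proof. exact: (vgeB). Qed.
Lemma OM {x y : K} : O x -> O y -> O (x * y).
Proof. by move=> hx hy; have := vgeM hx hy; rewrite addr0. Qed.
Lemma OX {x : K} n : O x -> O (x ^+ n).
Proof. move=> hx; elim: n => [|n IH]; first by rewrite expr0; apply: O1. by rewrite exprS; apply: OM. Qed.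
Lemma On (n : nat) : O n%:R.
Proof. elim: n => [|n IH]; first by left. by rewrite -addn1 natrD; apply: OD => //; apply: O1. Qed.
Lemma Ounit (x : K) : v x = 0 -> O x.
Proof. by move=> e; right; rewrite e. Qed.

Lemma vge2 : vge 2 1.
Proof. by right; lia. Qed.

Lemma vge_unitl {a b : K} {n} : a != 0 -> v a = 0 -> vge (a * b) n -> vge b n.
Proof.
move=> a0 va [/eqP|h].
  by rewrite mulf_eq0 (negbTE a0) /= => /eqP ->; left.
have [->|b0] := eqVneq b 0; first by left.
by right; move: h; rewrite hM // va add0r.
Qed.

Lemma vge_pow {y : K} n : (0 < n)%N -> vge (y ^+ n) 1 -> vge y 1.
Proof.
move=> n0 [/eqP|h]; first by rewrite expf_eq0 n0 /= => /eqP ->; left.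
have [->|y0] := eqVneq y 0; first by left.
right; move: h; rewrite (vX) //. case: n n0 => // n _. nia.
Qed.

Lemma congM {a a' b b' : K} : O a' -> O b -> vge (a - a') 1 -> vge (b - b') 1 ->
  vge (a * b - a' * b') 1.
Proof.
move=> ha hb h1 h2.
have -> : a * b - a' * b' = (a - a') * b + a' * (b - b') by ring.
apply: (vgeD).
  by have := vgeM h1 hb; rewrite addr0.
by have := vgeM ha h2; rewrite add0r.
Qed.

Lemma pow1 {x : K} k : O x -> vge (x - 1) 1 -> vge (x ^+ k - 1) 1.
Proof.
move=> hx h; elim: k => [|k IH]; first by rewrite expr0 subrr; left.
have -> : x ^+ k.+1 - 1 = x ^+ k * (x - 1) + (x ^+ k - 1) by rewrite exprS; ring.
apply: (vgeD) => //.
by have := vgeM (OX k hx) h; rewrite add0r.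
Qed.

Lemma halve {x : K} : O x -> vge (x ^+ 2 - 1) 1 -> vge (x - 1) 1.
Proof.
move=> hx h; apply: (@vge_pow _ 2) => //.
have -> : (x - 1) ^+ 2 = (x ^+ 2 - 1) - 2 * (x - 1) by ring.
apply: (vgeB) => //.
have := vgeM vge2 (OB hx O1); rewrite addr0 //.
Qed.

Lemma pigeon {c : K} : c != 0 -> v c = 0 -> exists m, (0 < m)%N /\ vge (c ^+ m - 1) 1.
Proof.
move=> c0 vc; case: hres => s hs.
have hO i : O (c ^+ i) by right; rewrite (vX) // vc mulr0.
have : forall i : 'I_(size s).+1, exists j : 'I_(size s), vge (c ^+ i - nth 0 s j) 1.
  move=> i; have [r rs hr] := hs _ (hO i).
  have hi : (index r s < size s)%N by rewrite index_mem.
  by exists (Ordinal hi); rewrite /= nth_index.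
case/fin_all_exists => f hf.
have : ~~ injectiveb f.
  apply/negP => /injectiveP inj; have := leq_card f inj; rewrite !card_ord ltnn //.
case/injectivePn => i [j] ij fij.
have key : forall i j : 'I_(size s).+1, f i = f j -> (i < j)%N ->
    exists m, (0 < m)%N /\ vge (c ^+ m - 1) 1.
  move=> i' j' fe lt; exists (j' - i')%N; split; first by rewrite subn_gt0.
  have h1 : vge (c ^+ i' - c ^+ j') 1.
    have := vgeB (hf i') (hf j'); rewrite fe.
    by have -> : forall a b d : K, a - d - (b - d) = a - b by move=> *; ring.
  have e : c ^+ j' = c ^+ i' * c ^+ (j' - i') by rewrite -exprD subnKC // ltnW.
  rewrite e in h1.
  have : vge (c ^+ i' * (1 - c ^+ (j' - i'))) 1.
    by move: h1; have -> : c ^+ i' - c ^+ i' * c ^+ (j' - i') = c ^+ i' * (1 - c ^+ (j' - i')) by ring.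
  move/(vge_unitl (expf_neq0 _ c0)); rewrite (vX) // vc mulr0 => /(_ erefl) h3.
  by rewrite -opprB; apply/(vgeN).
have [lt|gt|eq] := ltngtP i j.
- exact: key fij lt.
- exact: key (esym fij) gt.
- by move: ij; rewrite (val_inj eq) eqxx.
Qed.

Lemma odd_ord {c : K} : O c -> forall m, (0 < m)%N -> vge (c ^+ m - 1) 1 ->
  exists m', odd m' /\ vge (c ^+ m' - 1) 1.
Proof.
move=> hc m; elim/ltn_ind: m => m IH m0 hm.
case: (boolP (odd m)) => om; first by exists m.
have e : m = (m./2 + m./2)%N by rewrite addnn -[LHS]odd_double_half (negbTE om).
apply: (IH m./2); [lia|lia|].
apply: halve; first exact: OX.
by rewrite -exprM mulnC -[(2 * _)%N]/(m./2 + (m./2 + 0))%N addn0 -e.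
Qed.

Lemma root4 (c : K) (sigma : {rmorphism K -> K}) : c != 0 -> v c = 0 -> sigma c = c ->
  exists w, [/\ sigma w = w, O w & vge (w ^+ 4 - c) 1].
Proof.
move=> c0 vc sc.
have hc : O c by apply: Ounit.
have [m [m0 hm]] := pigeon c0 vc.
have [m' [om hm']] := odd_ord hc m m0 hm.
set k := m'./2.
have em : m' = (k + k).+1 by rewrite /k addnn -[LHS]odd_double_half om add1n.
exists (c ^+ (k.+1 ^ 2)); split.
- by rewrite rmorphXn sc.
- exact: OX.
- have ee : ((k.+1 ^ 2) * 4 = 1 + m' * (m' + 2))%N by rewrite em; nia.
  rewrite -exprM ee exprD expr1 exprM.
  have -> : c * (c ^+ m') ^+ (m' + 2) - c = c * ((c ^+ m') ^+ (m' + 2) - 1) by ring.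
  have := vgeM hc (pow1 (m' + 2) (OX m' hc) hm'); rewrite add0r //.
Qed.


Variable sigma : {rmorphism K -> K}.
Hypothesis hsig4 : forall x, sigma (sigma (sigma (sigma x))) = x.
Hypothesis hsigv : forall x : K, x != 0 -> v (sigma x) = v x.

Lemma sig0 (x : K) : x != 0 -> sigma x != 0.
Proof. by rewrite fmorph_eq0. Qed.

Lemma resid (hG0 : forall x, O x -> vge (sigma x - x) 1) (u : K) :
  v u = 0 -> exists w, sigma w = w /\ vge (u - w) 1.
Proof.
move=> vu; have [->|u0] := eqVneq u 0.
  by exists 0; rewrite rmorph0 subrr; split=> //; left.
have hu : O u by apply: Ounit.
have s1 : v (sigma u) = 0 by rewrite hsigv.
have s2 : v (sigma (sigma u)) = 0 by rewrite !hsigv ?sig0.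
have s3 : v (sigma (sigma (sigma u))) = 0 by rewrite !hsigv ?sig0.
have g1 : vge (sigma u - u) 1 by apply: hG0.
have g2 : vge (sigma (sigma u) - u) 1.
  have -> : sigma (sigma u) - u = (sigma (sigma u) - sigma u) + (sigma u - u) by ring.
  by apply: vgeD => //; apply: hG0; apply: Ounit.
have g3 : vge (sigma (sigma (sigma u)) - u) 1.
  have -> : sigma (sigma (sigma u)) - u = (sigma (sigma (sigma u)) - sigma (sigma u)) + (sigma (sigma u) - u) by ring.
  by apply: vgeD => //; apply: hG0; apply: Ounit.
set c := u * sigma u * sigma (sigma u) * sigma (sigma (sigma u)).
have c0 : c != 0 by rewrite /c !mulf_neq0 ?sig0.
have vc : v c = 0.
  by rewrite /c !hM ?mulf_neq0 ?sig0 // vu s1 s2 s3 !addr0.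
have sc : sigma c = c by rewrite /c !rmorphM hsig4; ring.
have cu : vge (c - u ^+ 4) 1.
  have -> : u ^+ 4 = u * u * u * u by ring.
  apply: congM; [by apply: OM; [apply: OM|] | exact: Ounit | | exact: g3].
  apply: congM; [by apply: OM | exact: Ounit | | exact: g2].
  by apply: congM; [| exact: Ounit | rewrite subrr; left |].
have [w [sw hw w4]] := root4 c sigma c0 vc sc.
exists w; split=> //.
have hS : O (u ^+ 4 - 2 * w ^+ 3 * u + 3 * w ^+ 2 * u ^+ 2 - 2 * w * u ^+ 3).
  apply: OB; [apply: OD; [apply: OB|]|].
  - exact: OX.
  - by apply: OM; [apply: OM; [apply: (On 2)|apply: OX]|].
  - by apply: OM; [apply: OM; [apply: (On 3)|apply: OX]|apply: OX].
  - by apply: OM; [apply: OM; [apply: (On 2)|]|apply: OX].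
have : vge ((w - u) ^+ 4) 1.
  have -> : (w - u) ^+ 4 = (w ^+ 4 - c) + (c - u ^+ 4) +
     2 * (u ^+ 4 - 2 * w ^+ 3 * u + 3 * w ^+ 2 * u ^+ 2 - 2 * w * u ^+ 3) by ring.
  apply: vgeD; first exact: vgeD.
  by have := vgeM vge2 hS; rewrite addr0.
move/(vge_pow 4 erefl) => h.
by rewrite -opprB; apply/vgeN.
Qed.

Lemma Gstep (hG0 : forall x, O x -> vge (sigma x - x) 1)
  (g : K -> K) (c : int) (pi : K) :
  (forall x y, g (x * y) = g x * g y) -> (forall x y, g (x - y) = g x - g y) ->
  (forall x : K, x != 0 -> v (g x) = v x) -> (forall x, sigma x = x -> g x = x) ->
  pi != 0 -> v pi = 1 -> 0 <= c ->
  (forall x, O x -> vge (g x - x) (c + 1)) -> vge (g pi - pi) (c + 2) ->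
  forall x, O x -> vge (g x - x) (c + 2).
Proof.
move=> gM gB gv gK pi0 vpi c0 hGc hpi.
have g1 : g 1 = 1 by apply: gK; rewrite rmorph1.
have g0 : g 0 = 0 by have := gB 0 0; rewrite !subrr.
pose P x := vge (g x - x) (v x + c + 1).
have Pmul : forall x y, x != 0 -> y != 0 -> P x -> P y -> P (x * y).
  move=> x y x0 y0 px py; rewrite /P.
  have -> : g (x * y) - x * y = (g x - x) * g y + x * (g y - y) by rewrite gM; ring.
  rewrite hM //; apply: vgeD.
    by apply: vge_le (vgeM px (vge_self (g y))) _; rewrite gv //; lia.
  by apply: vge_le (vgeM (vge_self x) py) _; lia.
have Ppow : forall n, P (pi ^+ n).
  elim=> [|n IH]; first by rewrite /P expr0 g1 subrr; left.
  rewrite exprS; apply: Pmul => //; first exact: expf_neq0.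
  by rewrite /P; apply: vge_le hpi _; rewrite vpi; lia.
have Pu : forall u, v u = 0 -> P u.
  by move=> u vu; rewrite /P vu add0r; apply: hGc; apply: Ounit.
have pos : forall x, x != 0 -> 1 <= v x -> vge (g x - x) (c + 2).
  move=> x x0 vx.
  have [n en] : exists n : nat, v x = n%:Z by exists `|v x|%N; lia.
  have pn0 : pi ^+ n != 0 by exact: expf_neq0.
  have vpn : v (pi ^+ n) = n%:Z by rewrite vX // vpi mulr1.
  have ex : x = pi ^+ n * (x / pi ^+ n) by rewrite mulrC divfK.
  have u0 : x / pi ^+ n != 0 by rewrite mulf_neq0 ?invr_eq0.
  have vu : v (x / pi ^+ n) = 0 by rewrite vDiv // en vpn subrr.
  have := Pmul _ _ pn0 u0 (Ppow n) (Pu _ vu); rewrite -ex /P => h.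
  have hh : c + 2 <= v x + c + 1 by rewrite en; lia.
  exact: (vge_le h hh).
move=> x [->|hx]; first by rewrite g0 subrr; left.
have [->|x0] := eqVneq x 0; first by rewrite g0 subrr; left.
have [vx0|vx1] : v x = 0 \/ 1 <= v x by lia.
  have [w [sw hw]] := resid hG0 _ vx0.
  have -> : g x - x = (g (x - w) - (x - w)) + (g w - w).
    by rewrite gB; ring.
  rewrite (gK _ sw) subrr addr0.
  have [->|m0] := eqVneq (x - w) 0; first by rewrite g0 subrr; left.
  apply: pos => //; by case: hw => [/eqP|]; [rewrite (negbTE m0)|].
exact: pos.
Qed.

Let G j g := in_lower_ram_group v j g.

Lemma Osig (x : K) : in_OK v x -> in_OK v (sigma x).
Proof.
move=> [->|h]; first by rewrite rmorph0; left.
have [->|x0] := eqVneq x 0; first by rewrite rmorph0; left.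
by right; rewrite hsigv.
Qed.

Lemma Gle {i j} {g : K -> K} : (i <= j)%N -> G j g -> G i g.
Proof.
move=> le hg x hx; apply: vge_le (hg x hx) _. by rewrite lez_nat ltnS.
Qed.

Lemma Gid j : G j id.
Proof. by move=> x _; rewrite subrr; left. Qed.

Lemma Gcomp j (g h : K -> K) : (forall x, in_OK v x -> in_OK v (h x)) ->
  G j g -> G j h -> G j (fun x => g (h x)).
Proof.
move=> hO hg hh x hx.
have -> : g (h x) - x = (g (h x) - h x) + (h x - x) by ring.
by apply: vgeD; [apply: hg; apply: hO|apply: hh].
Qed.

Lemma Gext j (g h : K -> K) : (forall x, g x = h x) -> G j g -> G j h.
Proof. by move=> e hg x hx; rewrite -e; apply: hg. Qed.

Let S j := G j sigma.
Let T j := G j (fun x => sigma (sigma x)).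
Let U j := G j (fun x => sigma (sigma (sigma x))).

Lemma ST j : S j -> T j.
Proof. by move=> h; apply: (@Gcomp _ sigma sigma) => //; apply: Osig. Qed.
Lemma SU j : S j -> U j.
Proof.
move=> h; apply: (@Gcomp _ sigma (fun x => sigma (sigma x))) => //; last exact: ST.
by move=> x hx; do 2 apply: Osig.
Qed.
Lemma US j : U j -> S j.
Proof.
move=> h; apply: (@Gext _ (fun x => sigma (sigma (sigma (sigma (sigma (sigma (sigma (sigma (sigma x)))))))))).
  by move=> x; rewrite !hsig4.
have OU : forall x, in_OK v x -> in_OK v (sigma (sigma (sigma x))) by move=> x hx; do 3 apply: Osig.
apply: (@Gcomp _ (fun x => sigma (sigma (sigma x))) (fun x => sigma (sigma (sigma (sigma (sigma (sigma x))))))) => //.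
  by move=> x hx; do 6 apply: Osig.
exact: (@Gcomp _ (fun x => sigma (sigma (sigma x))) (fun x => sigma (sigma (sigma x)))).
Qed.

Lemma break_ex j : ~ (forall k : 'I_4, G j (iter k sigma) <-> G j.+1 (iter k sigma)) ->
  exists k : 'I_4, G j (iter k sigma) /\ ~ G j.+1 (iter k sigma).
Proof.
move=> h; apply: NNPP => hn; apply: h => k; split; last by apply: Gle.
move=> g1; apply: NNPP => g2; apply: hn; by exists k.
Qed.

Lemma ram e0 : (1 <= e0)%N ->
  ~ (forall k : 'I_4, G e0 (iter k sigma) <-> G e0.+1 (iter k sigma)) ->
  ~ (forall k : 'I_4, G (e0 + 2 * e0) (iter k sigma) <-> G (e0 + 2 * e0).+1 (iter k sigma)) ->
  [/\ S e0, ~ S e0.+1, T (e0 + 2 * e0) & ~ T (e0 + 2 * e0).+1].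
Proof.
move=> e1 /break_ex [k [k1 k2]] /break_ex [k' [k1' k2']].
have le : (e0.+1 <= e0 + 2 * e0)%N by lia.
have eta : forall j (g : K -> K), G j g <-> G j (fun x => g x).
  by move=> j g; split; apply: Gext.
move/eta: k1; move/eta: k1'.
have nk2 : ~ G e0.+1 (fun x => iter k sigma x) by move/eta.
have nk2' : ~ G (e0 + 2 * e0).+1 (fun x => iter k' sigma x) by move/eta.
clear k2 k2' => k1' k1.
have [A|B] : (S e0 /\ ~ S e0.+1) \/ (T e0 /\ ~ T e0.+1).
  case: k k1 nk2 => [[|[|[|[|?]]]] ?] //= k1 k2.
  - by case: k2; apply: Gid.
  - by left; split; [apply/eta | move=> h; apply: k2; apply/eta].
  - by right.
  - by left; split; [apply: US | move=> h; apply: k2; apply: SU].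
- case: A => A1 A2.
  case: k' k1' nk2' => [[|[|[|[|?]]]] ?] //= k1' k2';
  first [ by case: k2'; apply: Gid
        | by split
        | by exfalso; apply: A2; rewrite /S; apply: Gle le k1'
        | by exfalso; apply: A2; have := US _ k1'; rewrite /S => h; apply: Gle le h ].
- case: B => B1 B2; exfalso.
  case: k' k1' nk2' => [[|[|[|[|?]]]] ?] //= k1' k2';
  first [ by case: k2'; apply: Gid
        | by apply: B2; exact: (ST _ (Gle le k1'))
        | by apply: B2; exact: (Gle le k1')
        | by apply: B2; exact: (Gle le (ST _ (US _ k1'))) ].
Qed.


Lemma vodd (n : nat) : odd n -> (n%:R : K) != 0 /\ v n%:R = 0.
Proof.
move=> on; set k := n./2.
have -> : n = (1 + 2 * k)%N by rewrite /k -[LHS]odd_double_half on -addnn mul2n addnn.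
rewrite natrD natrM.
have := vge_add_exact (x := 1) (y := 2%:R * k%:R) (n := 0) (oner_neq0 K) (v1).
rewrite add0r; apply.
by have := vgeM vge2 (On k); rewrite addr0.
Qed.

Variable e0 : nat.
Hypothesis he0odd : odd e0.
Variable pi : K.
Hypothesis pi0 : pi != 0.
Hypothesis vpi : v pi = 1.
Hypothesis hS : forall x, O x -> vge (sigma x - x) (e0%:Z + 1).
Hypothesis hpi : v (sigma pi - pi) = e0%:Z + 1.

Lemma e0pos : (1 <= e0)%N.
Proof. by case: e0 he0odd. Qed.

Let t := (sigma pi - pi) / pi.

Hypothesis hpi0 : sigma pi - pi != 0.

Lemma t0 : t != 0. Proof. by rewrite mulf_neq0 ?invr_eq0. Qed.
Lemma vt : v t = e0%:Z.
Proof. by rewrite vDiv // hpi vpi; lia. Qed.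

Definition Q x (n : nat) := vge (sigma x - x - n%:R * t * x) (v x + e0%:Z + 1).

Lemma Qmul {x y : K} {m n : nat} : x != 0 -> y != 0 -> Q x m -> Q y n -> Q (x * y) (m + n).
Proof.
move=> x0 y0 qx qy; rewrite /Q rmorphM hM // natrD.
have ep := e0pos.
set A := sigma x - x - m%:R * t * x in qx.
set B := sigma y - y - n%:R * t * y in qy.
have -> : sigma x * sigma y - x * y - (m%:R + n%:R) * t * (x * y) =
  x * B + A * y + m%:R * n%:R * t * t * x * y + m%:R * t * x * B + A * n%:R * t * y + A * B.
  by rewrite /A /B; ring.
have hm := On m; have hn := On n.
have ht : vge t e0%:Z by rewrite -vt; apply: vge_self.
repeat apply: vgeD.
- by apply: vge_le (vgeM (vge_self x) qy) _; lia.
- by apply: vge_le (vgeM qx (vge_self y)) _; lia.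
- apply: vge_le (vgeM (vgeM (vgeM (vgeM (vgeM hm hn) ht) ht) (vge_self x)) (vge_self y)) _; lia.
- apply: vge_le (vgeM (vgeM (vgeM hm ht) (vge_self x)) qy) _; lia.
- apply: vge_le (vgeM (vgeM (vgeM qx hn) ht) (vge_self y)) _; lia.
- apply: vge_le (vgeM qx qy) _; lia.
Qed.

Lemma Qpi : Q pi 1.
Proof. by rewrite /Q /t mul1r divfK // subrr; left. Qed.

Lemma Qu {u : K} : v u = 0 -> Q u 0.
Proof. by move=> vu; rewrite /Q mul0r mul0r subr0 vu add0r; apply: hS; apply: Ounit. Qed.

Lemma Qpow n : Q (pi ^+ n) n.
Proof.
elim: n => [|n IH]; first by rewrite /Q expr0 rmorph1 !subrr mul0r mul0r subrr; left.
by rewrite exprS -addn1 addnC; apply: Qmul => //; [exact: expf_neq0|exact: Qpi].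
Qed.

Lemma Dexact (w : K) : w != 0 -> v w = e0%:Z -> sigma w - w != 0 /\ v (sigma w - w) = (2 * e0)%:Z.
Proof.
move=> w0 vw.
have pn0 : pi ^+ e0 != 0 by exact: expf_neq0.
have vpn : v (pi ^+ e0) = e0%:Z by rewrite vX // vpi mulr1.
have ex : w = pi ^+ e0 * (w / pi ^+ e0) by rewrite mulrC divfK.
have u0 : w / pi ^+ e0 != 0 by rewrite mulf_neq0 ?invr_eq0.
have vu : v (w / pi ^+ e0) = 0 by rewrite vDiv // vw vpn subrr.
have := Qmul pn0 u0 (Qpow e0) (Qu vu); rewrite addn0 -ex /Q => h.
have [eo0 veo] := vodd e0 he0odd.
have -> : sigma w - w = e0%:R * t * w + (sigma w - w - e0%:R * t * w) by ring.
have et0 : e0%:R * t != 0 by apply: mulf_neq0 => //; exact: t0.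
have a0 : e0%:R * t * w != 0 by apply: mulf_neq0.
have va : v (e0%:R * t * w) = (2 * e0)%:Z.
  by rewrite hM // hM //; [rewrite veo vt vw; lia | exact: t0].
apply: vge_add_exact => //.
by apply: vge_le h _; rewrite vw; lia.
Qed.


Hypothesis hv2e : v 2 = (4 * e0)%:Z.
Hypothesis htau0 : sigma (sigma pi) - pi != 0.
Hypothesis htau : v (sigma (sigma pi) - pi) = (3 * e0)%:Z + 1.

Hypothesis hchar : [pchar K] =i pred0.

Lemma two0 : (2 : K) != 0.
Proof. by have := hchar 2; rewrite !inE /= => ->. Qed.


Lemma one0 : (1 : K) != 0. Proof. exact: oner_neq0. Qed.

Lemma zfacts : exists z, [/\ z != 0, sigma (sigma z) = - z, z - 1 != 0 & v (z - 1) = e0%:Z].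
Proof.
set Tp := sigma (sigma pi).
have vT : v Tp = 1 by rewrite /Tp !hsigv ?sig0.
have T0 : Tp != 0 by rewrite /Tp !sig0.
set d := pi - Tp; set s := pi + Tp.
have d0 : d != 0 by rewrite /d -opprB oppr_eq0.
have vd : v d = (3 * e0)%:Z + 1 by rewrite /d -opprB vN.
have p2 : 2 * pi != 0 by rewrite mulf_neq0 ?two0.
have vp2 : v (2 * pi) = (4 * e0)%:Z + 1 by rewrite hM ?two0 // hv2e vpi.
have [s0 vs] : s != 0 /\ v s = (3 * e0)%:Z + 1.
  have -> : s = 2 * pi + (Tp - pi) by rewrite /s; ring.
  by rewrite -htau; apply: vD_gt => //; rewrite htau vp2; have := e0pos; clia.
exists (d / s); split.
- by rewrite mulf_neq0 ?invr_eq0.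
- rewrite !fmorph_div /d /s !rmorphB !rmorphD hsig4 -/Tp.
  by rewrite [Tp + pi]addrC -mulNr opprB.
- have -> : d / s - 1 = - (2 * Tp) / s by rewrite /d /s; field.
  by rewrite mulf_neq0 ?invr_eq0 // oppr_eq0 mulf_neq0 ?two0.
- have -> : d / s - 1 = - (2 * Tp) / s by rewrite /d /s; field.
  rewrite vDiv ?oppr_eq0 ?mulf_neq0 ?two0 // vN hM ?two0 // hv2e vT vs. clia.
Qed.


Lemma yfacts : exists z y : K,
  [/\ [/\ z != 0, v z = 0, z - 1 != 0 & v (z - 1) = e0%:Z],
      sigma z = y * z,
      [/\ y != 0, v y = 0, y - 1 != 0, v (y - 1) = (2 * e0)%:Z & y + 1 != 0],
      v (y + 1) = (2 * e0)%:Z &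
      sigma (sigma y) = y /\ sigma y = - y^-1].
Proof.
have ep := e0pos.
have [z [z0 tz w0 vw]] := zfacts.
have [dw0 vdw] := Dexact _ w0 vw.
have sz0 : sigma z != 0 by apply: sig0.
have vz : v z = 0.
  have -> : z = (z - 1) + 1 by ring.
  have h1 : v 1 < v (z - 1) by rewrite v1 vw; clia.
  by have [_ ->] := vD_gt w0 one0 h1; rewrite v1.
have e1 : sigma (z - 1) - (z - 1) = sigma z - z by rewrite rmorphB rmorph1; ring.
rewrite e1 in dw0 vdw.
have y1e : sigma z / z - 1 = (sigma z - z) / z by field.
have y10 : sigma z / z - 1 != 0 by rewrite y1e mulf_neq0 ?invr_eq0.
have vy1 : v (sigma z / z - 1) = (2 * e0)%:Z by rewrite y1e vDiv // vdw vz subr0.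
have [y0 vy] : sigma z / z != 0 /\ v (sigma z / z) = 0.
  have -> : sigma z / z = 1 + (sigma z / z - 1) by ring.
  have h1 : v 1 < v (sigma z / z - 1) by rewrite v1 vy1; clia.
  by have [-> ->] := vD_lt one0 y10 h1; rewrite v1.
have ype : sigma z / z + 1 = sigma z / z - 1 + 2 by ring.
have [yp0 vyp] : sigma z / z + 1 != 0 /\ v (sigma z / z + 1) = (2 * e0)%:Z.
  rewrite ype -vy1; apply: vD_lt => //; [exact: two0 | rewrite vy1 hv2e; clia].
exists z, (sigma z / z); split=> //.
- by rewrite divfK.
- split.
    by rewrite !fmorph_div tz rmorphN invrN mulrNN.
  by rewrite fmorph_div tz invf_div mulNr.
Qed.


Variable lam : K.
Hypothesis lam0 : lam != 0.
Hypothesis slam : sigma lam = lam.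
Hypothesis vlam : v lam = 4.

Lemma kfacts (n : int) : [/\ lam ^ n != 0, sigma (lam ^ n) = lam ^ n & v (lam ^ n) = n * 4].
Proof. by split; [rewrite expfz_neq0 | rewrite fmorphXz slam | rewrite vXz // vlam]. Qed.

Lemma caseA (a n : int) : a = e0%:Z + n * 4 ->
  exists alpha rho : K,
    [/\ alpha != 0 /\ v alpha = a,
        rho != 0 /\ v rho = a + (2 * e0)%:Z &
        let mu1 := sigma alpha - alpha - rho in
          [/\ sigma (sigma mu1) = mu1, mu1 != 0 & v mu1 = a + e0%:Z]].
Proof.
move=> ea.
have [z [y [[z0 vz w0 vw] szy [y0 vy y10 vy1 yp0] vyp [tty sy]]]] := yfacts.
have [k0 sk vk] := kfacts n.
exists (lam ^ n * (z - 1)), (lam ^ n * (y - 1) * (z - 1)); split.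
- by split; [rewrite mulf_neq0 | rewrite hM // vk vw ea; clia].
- by split; [rewrite !mulf_neq0 | rewrite !hM ?mulf_neq0 // vk vw vy1 ea; clia].
- have -> : sigma (lam ^ n * (z - 1)) - lam ^ n * (z - 1) - lam ^ n * (y - 1) * (z - 1)
      = lam ^ n * (y - 1).
    by rewrite rmorphM rmorphB rmorph1 sk szy; ring.
  split.
  + by rewrite !rmorphM !rmorphB !rmorph1 !sk tty.
  + by rewrite mulf_neq0.
  + by rewrite hM // vk vy1 ea; clia.
Qed.

Lemma caseB (a n : int) : a = (3 * e0)%:Z + n * 4 ->
  exists alpha rho : K,
    [/\ alpha != 0 /\ v alpha = a,
        rho != 0 /\ v rho = a + (2 * e0)%:Z &
        let mu0 := sigma alpha + alpha - rho in
          [/\ sigma mu0 = mu0, mu0 != 0 & v mu0 = a + e0%:Z]].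
Proof.
move=> ea.
have [z [y [[z0 vz w0 vw] szy [y0 vy y10 vy1 yp0] vyp [tty sy]]]] := yfacts.
have [k [k0 sk vk]] : exists k, [/\ k != 0, sigma k = k & v k = (n + e0%:Z) * 4].
  by exists (lam ^ (n + e0%:Z)); apply: kfacts.
have sy10 : 1 + sigma y != 0.
  rewrite sy; have -> : 1 + - y^-1 = (y - 1) / y by field.
  by rewrite mulf_neq0 ?invr_eq0.
have yy0 : (y - 1) * (y + 1) != 0 by rewrite mulf_neq0.
exists (- (k * y * (z - 1)) / (y + 1)), (2 * k * y * (z - 1) / ((y - 1) * (y + 1))); split.
- split; first by rewrite mulf_neq0 ?invr_eq0 // oppr_eq0 !mulf_neq0.
  rewrite vDiv ?oppr_eq0 ?mulf_neq0 // vN !hM ?mulf_neq0 // vk vy vw vyp ea; clia.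
- split; first by rewrite !mulf_neq0 ?invr_eq0 ?two0.
  rewrite vDiv ?mulf_neq0 ?two0 // !hM ?mulf_neq0 ?two0 // hv2e vk vy vw vy1 vyp ea; clia.
- have -> : sigma (- (k * y * (z - 1)) / (y + 1)) + - (k * y * (z - 1)) / (y + 1)
      - 2 * k * y * (z - 1) / ((y - 1) * (y + 1)) = k.
    rewrite fmorph_div rmorphN !rmorphM rmorphB rmorphD rmorph1 sk szy.
    rewrite sy.
    by field; rewrite yp0 y10 y0.
  split=> //.
  by rewrite vk ea; clia.
Qed.

End Main.

Lemma oddE (e : nat) : odd e -> exists k : nat, e = (k + k).+1.
Proof. by move=> o; exists e./2; rewrite addnn -[LHS]odd_double_half o. Qed.

Lemma modE4 (a b : int) : (a = b %[mod 4])%Z -> exists n : int, a = b + n * 4.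
Proof.
move/eqP; rewrite eqz_mod_dvd => /dvdzP [n hn]; exists n; rewrite -hn; ring.
Qed.

Lemma split4 (a : int) (e0 : nat) : ~~ (2 %| a)%Z -> odd e0 ->
  (exists n : int, a = e0%:Z + n * 4) \/ (exists n : int, a = (3 * e0)%:Z + n * 4).
Proof.
move=> ha /oddE [k ek].
have ea := divz_eq a 4; have r0 := modz_ge0 a (isT : (4:int) != 0).
have r4 := ltz_pmod a (isT : (0:int) < 4).
have ee := divz_eq (e0%:Z) 4; have s0 := modz_ge0 (e0%:Z) (isT : (4:int) != 0).
have s4 := ltz_pmod (e0%:Z) (isT : (0:int) < 4).
set q := (a %/ 4)%Z in ea; set r := (a %% 4)%Z in ea r0 r4.
set q' := (e0%:Z %/ 4)%Z in ee; set s := (e0%:Z %% 4)%Z in ee s0 s4.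
have hs : s = 1 \/ s = 3 by lia.
have hr : r = 1 \/ r = 3.
  have [r02|//] : (r = 0 \/ r = 2) \/ (r = 1 \/ r = 3) by lia.
  case/negP: ha; apply/dvdzP.
  by case: r02 => e; [exists (q * 2)|exists (q * 2 + 1)]; rewrite ea e; ring.
case: hr => hr; case: hs => hs.
- by left; exists (q - q'); lia.
- by right; exists (q - 3 * q' - 2); lia.
- by right; exists (q - 3 * q'); lia.
- by left; exists (q - q'); lia.
Qed.

Lemma excl (a n m : int) (e0 : nat) : odd e0 -> a = e0%:Z + n * 4 ->
  a = (3 * e0)%:Z + m * 4 -> False.
Proof. by move=> /oddE [k ->]; lia. Qed.

Theorem lemma3p7 (K2 : fieldType) (v2 : K2 -> int)
  (sigma : {rmorphism K2 -> K2}) (e0 : nat)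
  (hK2 : finite_ext_Q2 v2)
  (hsig4 : forall x, sigma (sigma (sigma (sigma x))) = x)
  (hsig2 : exists x, sigma (sigma x) != x)
  (hsigv : forall x, x != 0 -> v2 (sigma x) = v2 x)
  (* totally ramified: v2(K0^x) = 4Z *)
  (htot : (forall x, x != 0 -> sigma x = x -> (4 %| v2 x)%Z) /\
          (exists x, [/\ x != 0, sigma x = x & v2 x = 4]))
  (* e0 = absolute ramification index of K0 = v0(2) = v2(2)/4, odd *)
  (he0 : v2 2 = (4 * e0)%:Z) (he0odd : odd e0)
  (* lower breaks: b1 = e0, b2 = b1 + 2 e0 *)
  (hbreaks : forall j : nat, is_lower_break v2 sigma j <-> (j = e0 \/ j = e0 + 2 * e0)%N) :
  forall a : int, ~~ (2 %| a)%Z ->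
  exists alpha rho : K2,
    [/\ alpha != 0 /\ v2 alpha = a,
        rho != 0 /\ v2 rho = a + (2 * e0)%:Z,
        (a = e0%:Z %[mod 4])%Z ->
          let mu1 := sigma alpha - alpha - rho in
          [/\ sigma (sigma mu1) = mu1, mu1 != 0 & v2 mu1 = a + e0%:Z]
      & (a = (3 * e0)%:Z %[mod 4])%Z ->
          let mu0 := sigma alpha + alpha - rho in
          [/\ sigma mu0 = mu0, mu0 != 0 & v2 mu0 = a + e0%:Z]].
Proof.
move=> a ha.
case: hK2 => [[hM hU [pi [pi0 vpi]]] _ hres hchar hv2].
have e1 : (1 <= e0)%N by case: (oddE _ he0odd) => k ->.
have B1 := proj2 ((proj2 (hbreaks e0)) (or_introl erefl)).
have B3 := proj2 ((proj2 (hbreaks (e0 + 2 * e0)%N)) (or_intror erefl)).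
have [hS hSn hT hTn] := ram K2 v2 hU hv2 sigma hsig4 hsigv e0 e1 B1 B3.
have hS' : forall x, in_OK v2 x -> vge v2 (sigma x - x) (e0%:Z + 1).
  by move=> x hx; apply: (vge_le K2 v2 (hS x hx)); lia.
have hG0 : forall x, in_OK v2 x -> vge v2 (sigma x - x) 1.
  by move=> x hx; apply: (vge_le K2 v2 (hS x hx)); lia.
have Opi : in_OK v2 pi by right; rewrite vpi.
have [hpi0 hpi] : sigma pi - pi != 0 /\ v2 (sigma pi - pi) = e0%:Z + 1.
  have nge : ~ vge v2 (sigma pi - pi) (e0%:Z + 2).
    move=> h; apply: hSn => x hx.
    have := Gstep K2 v2 hM hU hv2 hres sigma hsig4 hsigv hG0 sigma e0%:Z pi
      (fun x y => rmorphM sigma x y) (fun x y => rmorphB sigma x y) hsigv (fun x e => e)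
      pi0 vpi (isT : 0 <= e0%:Z) hS' h x hx.
    by move/(vge_le K2 v2); apply; lia.
  have [e|ne] := eqVneq (sigma pi - pi) 0; first by case: nge; left.
  split=> //; case: (hS' _ Opi) => [e|le]; first by rewrite e eqxx in ne.
  have : ~ (e0%:Z + 2 <= v2 (sigma pi - pi)) by move=> h; apply: nge; right.
  lia.
have gv : forall x, x != 0 -> v2 (sigma (sigma x)) = v2 x.
  by move=> x x0; rewrite !hsigv // fmorph_eq0.
have hT' : forall x, in_OK v2 x -> vge v2 (sigma (sigma x) - x) ((3 * e0)%:Z + 1).
  by move=> x hx; apply: (vge_le K2 v2 (hT x hx)); lia.
have [htau0 htau] : sigma (sigma pi) - pi != 0 /\ v2 (sigma (sigma pi) - pi) = (3 * e0)%:Z + 1.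
  have nge : ~ vge v2 (sigma (sigma pi) - pi) ((3 * e0)%:Z + 2).
    move=> h; apply: hTn => x hx.
    have := Gstep K2 v2 hM hU hv2 hres sigma hsig4 hsigv hG0 (fun x => sigma (sigma x)) (3 * e0)%:Z pi
      (fun x y => etrans (f_equal sigma (rmorphM sigma x y)) (rmorphM sigma _ _))
      (fun x y => etrans (f_equal sigma (rmorphB sigma x y)) (rmorphB sigma _ _)) gv
      (fun x e => etrans (f_equal sigma e) e)
      pi0 vpi (isT : 0 <= (3 * e0)%:Z) hT' h x hx.
    by move/(vge_le K2 v2); apply; lia.
  have [e|ne] := eqVneq (sigma (sigma pi) - pi) 0; first by case: nge; left.
  split=> //; case: (hT' _ Opi) => [e|le]; first by rewrite e eqxx in ne.
  have : ~ ((3 * e0)%:Z + 2 <= v2 (sigma (sigma pi) - pi)) by move=> h; apply: nge; right.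
  lia.
case: htot => _ [lam [lam0 slam vlam]].
have [[n en]|[n en]] := split4 a e0 ha he0odd.
- have [alpha [rho [h1 h2 h3]]] := caseA K2 v2 hM hU hv2 sigma hsig4 hsigv e0 he0odd pi pi0 vpi hS' hpi hpi0
    he0 htau0 htau hchar lam lam0 slam vlam a n en.
  exists alpha, rho; split=> // /modE4 [m em].
  by case: (excl a n m e0 he0odd en em).
- have [alpha [rho [h1 h2 h3]]] := caseB K2 v2 hM hU hv2 sigma hsig4 hsigv e0 he0odd pi pi0 vpi hS' hpi hpi0
    he0 htau0 htau hchar lam lam0 slam vlam a n en.
  exists alpha, rho; split=> // /modE4 [m em].
  by case: (excl a m n e0 he0odd em en).
Qed.
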